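(* Let $F:\mathbb{R}^n\to\mathbb{R}$ be a finite PL function and let $M>0$ be such that $F(C)\subseteq[-M,M]$ for every flat cell $C$. Let $n_{\pm}$ be the number of connected components of $\{F\le\pm M\}$ and $n^{\pm}$ the number of connected components of $\{F\ge \pm M\}$. Then (i) $|n_- - n_+|\le \operatorname{rank} H_*(\{F\le M\},\{F\le -M\})$ (the coarse bounded sublevel $H$-complexity), and (ii) $|n^+ - n^-|\le \operatorname{rank} H_*(\{F\ge -M\},\{F\ge M\})$ (the coarse bounded superlevel $H$-complexity).
   Context: A finite PL function $F:\mathbb{R}^n\to\mathbb{R}$ is a continuous function that is affine-linear on each cell of some finite polyhedral complex $\mathcal{C}$ (finite collection of polyhedral sets, closed under taking faces, pairwise intersecting in common faces) with $|\mathcal{C}|=\mathbb{R}^n$; a cell is flat if $F$ is constant on it (all $0$-cells are flat). $\{F\le t\}=F^{-1}((-\infty,t])$, $\{F\ge t\}=F^{-1}([t,\infty))$. $H_*$ denotes singular homology with $\mathbb{Z}$ coefficients and $\operatorname{rank}H_*$ the sum over all degrees of the ranks. *)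

(* Defs.v *)
From HB Require Import structures.
From mathcomp Require Import all_boot all_order all_algebra.
From mathcomp Require Import all_classical all_reals all_analysis.
Set Implicit Arguments. Unset Strict Implicit. Unset Printing Implicit Defensive.
Import Order.TTheory GRing.Theory Num.Theory.
Import numFieldNormedType.Exports.
Local Open Scope classical_set_scope.
Local Open Scope ring_scope.

Section Defs.
Variable R : realType.

Definition dotp (n : nat) (a x : 'rV[R]_n) : R := \sum_(i < n) a 0 i * x 0 i.

Definition halfspace (n : nat) (a : 'rV[R]_n) (b : R) : set 'rV[R]_n :=
  [set x | dotp a x <= b].

Definition hyperplane (n : nat) (a : 'rV[R]_n) (b : R) : set 'rV[R]_n :=
  [set x | dotp a x = b].

Definition polyhedron (n : nat) (P : set 'rV[R]_n) : Prop :=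
  exists (k : nat) (a : 'I_k -> 'rV[R]_n) (b : 'I_k -> R),
    P = [set x | forall j : 'I_k, halfspace (a j) (b j) x].

(* Q is a face of the polyhedron P: the intersection of P with a
   supporting hyperplane (a = 0, b = 0 gives P itself; a = 0, b = 1 gives
   the empty face). *)
Definition face (n : nat) (Q P : set 'rV[R]_n) : Prop :=
  exists (a : 'rV[R]_n) (b : R), P `<=` halfspace a b /\ Q = P `&` hyperplane a b.

Definition polyhedral_complex (n m : nat) (C : 'I_m -> set 'rV[R]_n) : Prop :=
  [/\ forall i, polyhedron (C i),
      forall i Q, face Q (C i) -> exists j, C j = Q
    & forall i j, face (C i `&` C j) (C i) /\ face (C i `&` C j) (C j)].

Definition affine_on (n : nat) (F : 'rV[R]_n -> R) (P : set 'rV[R]_n) : Prop :=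
  exists (a : 'rV[R]_n) (c : R), forall x, P x -> F x = dotp a x + c.

Definition flat_cell (n : nat) (F : 'rV[R]_n -> R) (P : set 'rV[R]_n) : Prop :=
  exists c : R, forall x, P x -> F x = c.

Definition finite_PL (n m : nat) (F : 'rV[R]_n -> R) (C : 'I_m -> set 'rV[R]_n) : Prop :=
  [/\ continuous F, polyhedral_complex C,
      \bigcup_(i in [set: 'I_m]) C i = [set: 'rV[R]_n]
    & forall i, affine_on F (C i)].

Definition components (n : nat) (A : set 'rV[R]_n) : set (set 'rV[R]_n) :=
  connected_component A @` A.

Definition ncomp (n : nat) (A : set 'rV[R]_n) (k : nat) : Prop :=
  is_true (card_eq (components A) `I_k).

Definition std_simplex (k : nat) : set 'rV[R]_k.+1 :=
  [set t | (forall i, 0 <= t 0 i) /\ \sum_(i < k.+1) t 0 i = 1].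
Arguments std_simplex : clear implicits.

(* a singular k-simplex is represented by a map on R^(k+1), normalized to
   be 0 outside the standard simplex (so that it is determined by its
   restriction to the standard simplex) *)
Definition sing_simplex (n k : nat) := 'rV[R]_k.+1 -> 'rV[R]_n.

Definition admissible (n k : nat) (X : set 'rV[R]_n) (s : sing_simplex n k) : Prop :=
  [/\ {within (std_simplex k), continuous s},
      s @` std_simplex k `<=` X
    & forall t, ~ std_simplex k t -> s t = 0].

Definition chain (n k : nat) := seq (int * sing_simplex n k).

Definition coef (n k : nat) (c : chain n k) (s : sing_simplex n k) : int :=
  \sum_(p <- c) (if `[< p.2 = s >] then p.1 else 0).

(* equality of chains in the free abelian group *)
Definition chain_eq (n k : nat) (c d : chain n k) : Prop :=
  forall s, coef c s = coef d s.

Definition chain_in (n k : nat) (X : set 'rV[R]_n) (c : chain n k) : Prop :=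
  forall p, p \in c -> admissible X p.2.

Definition scale_chain (n k : nat) (l : int) (c : chain n k) : chain n k :=
  [seq (l * p.1, p.2) | p <- c].

Definition coface (k : nat) (i : 'I_k.+2) (t : 'rV[R]_k.+1) : 'rV[R]_k.+2 :=
  \row_(j < k.+2) (if (j < i)%N then t 0 (inord j)
                   else if (j == i :> nat) then 0 else t 0 (inord j.-1)).

Definition face_map (n k : nat) (s : sing_simplex n k.+1) (i : 'I_k.+2) :
  sing_simplex n k :=
  fun t => if `[< std_simplex k t >] then s (coface i t) else 0.

Definition boundary (n k : nat) (c : chain n k.+1) : chain n k :=
  flatten [seq [seq (((-1) ^+ i : int) * p.1, face_map p.2 i) | i : 'I_(k.+2) <- enum 'I_(k.+2)]
          | p <- c].

(* relative cycles of (X, A) in degree k: boundary lies in C_{k-1}(A) *)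
Definition rel_cycle (n : nat) (X A : set 'rV[R]_n) (k : nat) : chain n k -> Prop :=
  match k return chain n k -> Prop with
  | 0 => fun c => chain_in X c
  | k'.+1 => fun c => chain_in X c /\
                      exists a : chain n k', chain_in A a /\ chain_eq (boundary c) a
  end.

(* relative boundaries: elements of B_k(X) + C_k(A) *)
Definition rel_boundary (n : nat) (X A : set 'rV[R]_n) (k : nat) (c : chain n k) : Prop :=
  exists (w : chain n k.+1) (a : chain n k),
    [/\ chain_in X w, chain_in A a & chain_eq c (boundary w ++ a)].

Definition lincomb (n k r : nat) (l : 'I_r -> int) (f : 'I_r -> chain n k) : chain n k :=
  flatten [seq scale_chain (l i) (f i) | i <- enum 'I_r].

(* H_k(X, A; Z) contains r Z-linearly independent classes *)
Definition hrank_deg_ge (n : nat) (X A : set 'rV[R]_n) (k r : nat) : Prop :=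
  exists f : 'I_r -> chain n k,
    (forall i, rel_cycle X A (f i)) /\
    (forall l : 'I_r -> int, rel_boundary X A (lincomb l f) -> forall i, l i = 0).

(* rank H_*(X, A; Z) = sum over all degrees of rank H_k(X, A; Z) is >= r
   (ranks understood as maximal sizes of Z-independent families, so that
   this also makes sense if the rank is infinite). *)
Definition hrank_ge (n : nat) (X A : set 'rV[R]_n) (r : nat) : Prop :=
  exists ms : seq nat,
    (r <= sumn ms)%N /\ forall k, (k < size ms)%N -> hrank_deg_ge X A k (nth 0%N ms k).

End Defs.

(* Main.v *)
Require Import Defs.
From HB Require Import structures.
From mathcomp Require Import all_boot all_order all_algebra.
From mathcomp Require Import all_classical all_reals all_analysis.
From mathcomp Require Import zify ring lra.
Import Order.TTheory GRing.Theory Num.Theory.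
Import numFieldNormedType.Exports.
Local Open Scope classical_set_scope.
Local Open Scope ring_scope.
Set Implicit Arguments. Unset Strict Implicit. Unset Printing Implicit Defensive.

Section Chains.
Variables (R : realType) (n : nat).

Definition Lf (k : nat) (phi : sing_simplex R n k -> int) (c : chain R n k) : int :=
  \sum_(p <- c) p.1 * phi p.2.

Lemma Lf_cat k phi (c d : chain R n k) : Lf phi (c ++ d) = Lf phi c + Lf phi d.
Proof. by rewrite /Lf big_cat. Qed.

Lemma Lf_flatten k phi (ss : seq (chain R n k)) :
  Lf phi (flatten ss) = \sum_(c <- ss) Lf phi c.
Proof.
elim: ss => [|c ss IH]; first by rewrite /Lf !big_nil.
by rewrite /= Lf_cat IH big_cons.
Qed.

Lemma Lf_scale k phi l (c : chain R n k) : Lf phi (scale_chain l c) = l * Lf phi c.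
Proof.
rewrite /Lf /scale_chain big_map mulr_sumr; apply: eq_bigr => p _ /=.
by rewrite mulrA.
Qed.

Lemma Lf_lincomb k r phi (l : 'I_r -> int) (f : 'I_r -> chain R n k) :
  Lf phi (lincomb l f) = \sum_(i < r) l i * Lf phi (f i).
Proof.
rewrite /lincomb Lf_flatten big_map big_enum /=.
by apply: eq_bigr => i _; rewrite Lf_scale.
Qed.

Definition ind_s k (s : sing_simplex R n k) : sing_simplex R n k -> int :=
  fun s' => if `[< s' = s >] then 1 else 0.

Lemma coefE k (c : chain R n k) s : coef c s = Lf (ind_s s) c.
Proof.
rewrite /coef /Lf; apply: eq_bigr => p _; rewrite /ind_s.
by case: ifP => _; rewrite ?mulr1 ?mulr0.
Qed.

Lemma Lf_coef k phi (c : chain R n k) (U : seq (sing_simplex R n k)) :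
  uniq U -> {subset map snd c <= U} ->
  Lf phi c = \sum_(s <- U) coef c s * phi s.
Proof.
move=> uU; elim: c => [|p c IH] sub.
  by rewrite /Lf big_nil big1 // => s _; rewrite /coef big_nil mul0r.
have pU : p.2 \in U by apply: sub; rewrite inE eqxx.
rewrite /Lf big_cons -/(Lf phi c) IH; last first.
  by move=> s sc; apply: sub; rewrite inE sc orbT.
have cc : forall s, coef (p :: c) s = (if `[< p.2 = s >] then p.1 else 0) + coef c s.
  by move=> s; rewrite /coef big_cons.
rewrite [RHS](eq_bigr (fun s => (if `[< p.2 = s >] then p.1 else 0) * phi s + coef c s * phi s)); last by move=> s _; rewrite cc mulrDl.
rewrite big_split /=; congr (_ + _).
rewrite (bigD1_seq p.2) //= asboolT // big1 ?addr0 // => s /negPf sp.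
rewrite asboolF ?mul0r //; move=> e; move: sp; rewrite e eqxx //.
Qed.

Lemma Lf_eq k phi (c d : chain R n k) : chain_eq c d -> Lf phi c = Lf phi d.
Proof.
move=> e.
rewrite (@Lf_coef _ _ c (undup (map snd (c ++ d)))) ?undup_uniq //; last first.
  by move=> s; rewrite mem_undup map_cat mem_cat => ->.
rewrite (@Lf_coef _ _ d (undup (map snd (c ++ d)))) ?undup_uniq //; last first.
  by move=> s; rewrite mem_undup map_cat mem_cat => ->; rewrite orbT.
by apply: eq_bigr => s _; rewrite e.
Qed.

Lemma Lf_boundary k phi (w : chain R n k.+1) :
  Lf phi (boundary w) =
  \sum_(p <- w) p.1 * \sum_(i < k.+2) ((-1) ^+ i) * phi (face_map p.2 i).
Proof.
rewrite /boundary Lf_flatten big_map; apply: eq_bigr => p _.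
rewrite /Lf big_map big_enum /= mulr_sumr; apply: eq_bigr => i _ /=.
by rewrite mulrCA mulrA.
Qed.

End Chains.

Section Simplices.
Variables (R : realType) (n : nat).
Local Notation V := 'rV[R]_n.

Definition vtx (k j : nat) : 'rV[R]_k.+1 := \row_(m < k.+1) (if (m == j :> nat) then 1 else 0).

Lemma coface_vtx k (i : 'I_k.+2) j : (j < k.+1)%N ->
  coface i (vtx k j) = vtx k.+1 (bump i j).
Proof.
move=> jk; apply/rowP => l; rewrite !mxE.
have li : (l < k.+2)%N by [].
case: (ltngtP l i) => h.

- rewrite inordK; last by have := ltn_ord i; lia.
  rewrite /bump; case: (leqP i j) => h2.
    by rewrite !ifF //; apply/eqP; lia.
  by rewrite add0n.
- rewrite inordK; last by lia.
  rewrite /bump; case: (leqP i j) => h2.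
    by rewrite add1n; congr (if _ then _ else _); apply/eqP/eqP; lia.
  by rewrite !ifF //; apply/eqP; lia.
- rewrite h /bump ifF //; apply/eqP; case: (leqP i j) => h2; lia.
Qed.

Lemma vtx_std k j : (j < k.+1)%N -> std_simplex (vtx k j).
Proof.
move=> jk; split.
  by move=> i; rewrite mxE; case: ifP => _ //; rewrite ler01.
rewrite (bigD1 (Ordinal jk)) //= mxE eqxx big1 ?addr0 // => i ne.
rewrite mxE ifF //; apply: contraNF ne => /eqP e; apply/eqP/val_inj => /=.
exact: e.
Qed.

Lemma std0_vtx (t : 'rV[R]_1) : std_simplex t -> t = vtx 0 0.
Proof.
move=> [_ s]; apply/rowP => j; rewrite mxE (ord1 j) /=.
by rewrite big_ord1 in s; rewrite -s.
Qed.

Definition pt (x : V) : sing_simplex R n 0 :=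
  fun t => if `[< std_simplex t >] then x else 0.

Definition seg (x y : V) : sing_simplex R n 1 :=
  fun t => if `[< std_simplex t >] then t ord0 ord0 *: x + t ord0 (lift ord0 ord0) *: y else 0.

Lemma face_seg x y (i : 'I_2) :
  face_map (seg x y) i = pt (if (i == 0 :> nat) then y else x).
Proof.
apply/funext => t; rewrite /face_map /pt.
case: (pselect (std_simplex t)) => ht; last by rewrite (asboolF ht).
rewrite asboolT // (std0_vtx ht) coface_vtx // /seg asboolT; last first.
  by apply: vtx_std; rewrite /bump; case: (i <= 0)%N.
case: i => -[|[|//]] ? /=; rewrite /bump /vtx /= !mxE /=.
  by rewrite scale0r add0r scale1r.
by rewrite scale0r addr0 scale1r.
Qed.

Lemma std1_sum (t : 'rV[R]_2) : std_simplex t ->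
  [/\ 0 <= t ord0 ord0, 0 <= t ord0 (lift ord0 ord0) & t ord0 ord0 + t ord0 (lift ord0 ord0) = 1].
Proof.
move=> [h s]; split => //.
by rewrite big_ord_recl big_ord1 in s.
Qed.

Lemma pt_adm (X : set V) x : X x -> admissible X (pt x).
Proof.
move=> Xx; split.
- apply: (@subspace_eq_continuous _ _ _ (fun _ => x)).
    by move=> t; rewrite inE => ht /=; rewrite /from_subspace /pt (asboolT ht).
  exact: cst_continuous.
- by move=> _ [t ht <-]; rewrite /pt (asboolT ht).
- by move=> t ht; rewrite /pt (asboolF ht).
Qed.

Lemma seg_adm (X : set V) x y :
  (forall a b : R, 0 <= a -> 0 <= b -> a + b = 1 -> X (a *: x + b *: y)) ->
  admissible X (seg x y).
Proof.
move=> hX; split.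
- apply: (@subspace_eq_continuous _ _ _ (fun t : 'rV[R]_2 => t ord0 ord0 *: x + t ord0 (lift ord0 ord0) *: y)).
    by move=> t; rewrite inE => ht /=; rewrite /from_subspace /seg (asboolT ht).
  apply: continuous_subspaceT => t.
  apply: (@continuousD _ _ _ (fun t : 'rV[R]_2 => t ord0 ord0 *: x)
    (fun t : 'rV[R]_2 => t ord0 (lift ord0 ord0) *: y));
    apply: continuousZr_tmp; exact: coord_continuous.
- move=> _ [t ht <-]; rewrite /seg (asboolT ht).
  by have [? ? ?] := std1_sum ht; apply: hX.
- by move=> t ht; rewrite /seg (asboolF ht).
Qed.

Lemma std1_connected : connected (@std_simplex R 1).
Proof.
pose h := fun s : R => vtx 1 0 + s *: (vtx 1 1 - vtx 1 0).
have -> : @std_simplex R 1 = h @` `[0, 1]%classic.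
  apply/seteqP; split => t.
  - move=> ht; have [h0 h1 hs] := std1_sum ht.
    exists (t ord0 (lift ord0 ord0)).
      by rewrite /= in_itv /= h1 /=; lra.
    apply/rowP => j; rewrite /h !mxE; case: j => -[|[|//]] i /=.
      have -> : (Ordinal (n:=2) (m:=0) i = ord0) by apply/val_inj.
      lra.
    have -> : (Ordinal (n:=2) (m:=1) i = lift ord0 ord0) by apply/val_inj.
    lra.
  - move=> [s]; rewrite /= in_itv /= => /andP[s0 s1] <-; split.
      by move=> j; rewrite /h !mxE; case: j => -[|[|//]] ? /=;
        lra.
    rewrite big_ord_recl big_ord1 /h !mxE /=; lra.
apply: connected_continuous_connected; first exact: segment_connected.
apply: continuous_subspaceT => s.
apply: (@continuousD _ _ _ (fun=> vtx 1 0) (fun s : R => s *: (vtx 1 1 - vtx 1 0))).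
  exact: cst_continuous.
by apply: continuousZr_tmp.
Qed.

Lemma adm1_comp (X : set V) (s : sing_simplex R n 1) : admissible X s ->
  connected_component X (s (vtx 1 0)) (s (vtx 1 1)).
Proof.
move=> [cs sX _].
have H : (s @` @std_simplex R 1) (s (vtx 1 0)) by exists (vtx 1 0) => //; apply: vtx_std.
have H2 : connected (s @` @std_simplex R 1).
  exact: connected_continuous_connected std1_connected cs.
apply: (connected_component_max H sX H2).
by exists (vtx 1 1) => //; apply: vtx_std.
Qed.

Lemma face_vtx k (s : sing_simplex R n k.+1) (i : 'I_k.+2) j : (j < k.+1)%N ->
  face_map s i (vtx k j) = s (vtx k.+1 (bump i j)).
Proof. by move=> jk; rewrite /face_map asboolT ?coface_vtx //; apply: vtx_std. Qed.

Definition phi0 (g : V -> int) (s : sing_simplex R n 0) : int := g (s (vtx 0 0)).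
Definition phi1 (g : V -> int) (s : sing_simplex R n 1) : int :=
  g (s (vtx 1 1)) - g (s (vtx 1 0)).

Lemma bd_phi0 g (s : sing_simplex R n 1) :
  \sum_(i < 2) (-1) ^+ i * phi0 g (face_map s i) = phi1 g s.
Proof.
rewrite !big_ord_recl big_ord0 /phi0 /phi1 !face_vtx //=.
have b00 : bump 0 0 = 1%N by [].
rewrite b00.
by rewrite expr0 expr1 !mul1r addr0 mulN1r addrC.
Qed.

Lemma bd_phi1 g (s : sing_simplex R n 2) :
  \sum_(i < 3) (-1) ^+ i * phi1 g (face_map s i) = 0.
Proof.
rewrite !big_ord_recl big_ord0 /phi1 !face_vtx //=.
have b00 : bump 0 0 = 1%N by [].
have b01 : bump 0 1 = 2%N by [].
have b11 : bump 1 1 = 2%N by [].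
have b10 : bump 1 0 = 0%N by [].
have b21 : bump 2 1 = 1%N by [].
have b20 : bump 2 0 = 0%N by [].
rewrite !b00 !b01 !b11 !b10 !b21 !b20 expr0 expr1 expr2 mulrNN mulr1 !mul1r mulN1r addr0.
set a := g (s (vtx 2 0)); set b := g (s (vtx 2 1)); set c := g (s (vtx 2 2)).
lia.
Qed.

Definition gind (K : set V) : V -> int := fun x => if `[< K x >] then 1 else 0.

Lemma face_sum_seg (phi : sing_simplex R n 0 -> int) x y :
  \sum_(i < 2) (-1) ^+ i * phi (face_map (seg x y) i) = phi (pt y) - phi (pt x).
Proof.
rewrite !big_ord_recl big_ord0 !face_seg /=.
by rewrite expr0 expr1 mul1r mulN1r addr0.
Qed.

Fixpoint poly (x : V) (xs : seq V) : chain R n 1 :=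
  if xs is y :: ys then (1, seg x y) :: poly y ys else [::].

Lemma poly_faces (phi : sing_simplex R n 0 -> int) x xs :
  \sum_(p <- poly x xs) p.1 * \sum_(i < 2) (-1) ^+ i * phi (face_map p.2 i) =
  phi (pt (last x xs)) - phi (pt x).
Proof.
elim: xs x => [|y ys IH] x /=; first by rewrite big_nil subrr.
rewrite big_cons IH /= face_sum_seg mul1r.
set a := phi _; set b := phi _; set c := phi _; lia.
Qed.

Lemma poly_bd x xs :
  chain_eq (boundary (poly x xs)) [:: (1, pt (last x xs)); (-1, pt x)].
Proof.
move=> s; rewrite !coefE Lf_boundary poly_faces /Lf !big_cons big_nil /=.
by rewrite mul1r mulN1r addr0.
Qed.

Lemma Lf_poly g x xs : Lf (phi1 g) (poly x xs) = g (last x xs) - g x.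
Proof.
rewrite /Lf.
under eq_bigr => p _ do rewrite -bd_phi0.
rewrite poly_faces /phi0 /pt !asboolT //; apply: vtx_std => //.
Qed.

Fixpoint okp (Q : V -> V -> Prop) (x : V) (xs : seq V) : Prop :=
  if xs is y :: ys then Q x y /\ okp Q y ys else True.

Lemma poly_chain_in (X : set V) (Q : V -> V -> Prop) x xs :
  (forall u v, Q u v -> forall a b : R, 0 <= a -> 0 <= b -> a + b = 1 ->
     X (a *: u + b *: v)) ->
  okp Q x xs -> chain_in X (poly x xs).
Proof.
move=> hQ; elim: xs x => [|y ys IH] x /=; first by move=> _ p.
move=> [qxy ok] p; rewrite inE => /orP[/eqP ->|pin] /=.
  by apply: seg_adm; apply: hQ.
exact: (IH y ok p pin).
Qed.

Lemma okp_rcons (Q : V -> V -> Prop) x xs z :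
  okp Q x xs -> Q (last x xs) z -> okp Q x (rcons xs z).
Proof. by elim: xs x => [|y ys IH] x /=; [|move=> [q o] h; split => //; apply: IH]. Qed.

Lemma poly_connect (m : nat) (P : 'I_m -> set V) (X : set V) :
  (forall z, X z <-> exists i, P i z) -> (forall i, closed (P i)) ->
  forall x y, X x -> connected_component X x y ->
  exists xs, okp (fun u v => exists i, P i u /\ P i v) x xs /\ last x xs = y.
Proof.
move=> hX hcl x y Xx Kxy.
set Q := (fun u v => exists i, P i u /\ P i v).
set Rch := [set z | exists xs, okp Q x xs /\ last x xs = z].
set I := [set i | exists2 z, P i z & Rch z].
have ext : forall i z, I i -> P i z -> Rch z.
  move=> i z [w Pw [xs [ok lw]]] Pz; exists (rcons xs z); split.
    by apply: okp_rcons => //; exists i; rewrite lw.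
  by rewrite last_rcons.
set K := connected_component X x.
have KX : K `<=` X by apply: connected_component_sub.
have eqK : K `&` Rch = K.
  apply: (@component_connected _ X x).
  - exists x; split; first exact: connected_component_refl.
    by exists [::].
  - exists (~` (\bigcup_(i in ~` I) P i)).
      apply: closed_openC; apply: closed_bigcup; first exact: finite_finset.
      by move=> i _; apply: hcl.
    apply/seteqP; split => z [Kz hz]; split => //.
      by move=> [i nIi Pz]; apply: nIi; exists z.
    have [i Pz] := (hX z).1 (KX z Kz).
    have [Ii|nIi] := pselect (I i); first exact: ext Ii Pz.
    by exfalso; apply: hz; exists i.
  - exists (\bigcup_(i in I) P i).
      apply: closed_bigcup; first exact: finite_finset.
      by move=> i _; apply: hcl.
    apply/seteqP; split => z [Kz hz]; split => //.
      have [i Pz] := (hX z).1 (KX z Kz).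
      by exists i => //; exists z.
    by case: hz => i Ii Pz; apply: ext Ii Pz.
have : (K `&` Rch) y by rewrite eqK.
by move=> [_ [xs [ok lxs]]]; exists xs.
Qed.

Lemma comp_sub (X A : set V) a : A `<=` X -> A a ->
  connected_component A a `<=` connected_component X a.
Proof.
move=> AX Aa; apply: connected_component_max.
- exact: connected_component_refl.
- by move=> z /connected_component_sub/AX.
- exact: component_connected.
Qed.

Lemma comp_same (X : set V) u v z : connected_component X u z ->
  connected_component X v z -> connected_component X u = connected_component X v.
Proof.
by move=> h1 h2; rewrite (same_connected_component h1) (same_connected_component h2).
Qed.

Lemma gind_comp (Y : set V) c u v : connected_component Y u v ->
  gind (connected_component Y c) u = gind (connected_component Y c) v.
Proof.
move=> huv.
have e : connected_component Y c u <-> connected_component Y c v.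
  split=> h; first exact: connected_component_trans h huv.
  exact: connected_component_trans h (connected_component_sym huv).
rewrite /gind; case: (pselect (connected_component Y c u)) => h.
  by rewrite !asboolT //; apply/e.
by rewrite !asboolF // => /e.
Qed.

Lemma ncomp_enum (X : set V) k : ncomp X k ->
  exists e : 'I_k -> set V,
  [/\ forall i, exists2 x, X x & e i = connected_component X x,
      injective e &
      forall x, X x -> exists i, e i = connected_component X x].
Proof.
move=> /card_set_bijP [f [ffun finj fsurj]].
have hi : forall i : 'I_k, exists C, components X C /\ f C = i.
  move=> i; have : `I_k (i : nat) by rewrite /=.
  by move=> /fsurj [C hC fC]; exists C.
have [e he] := choice hi.
exists e; split.
- move=> i; have [[x Xx <-] _] := he i; by exists x.
- move=> i j eij; apply: ord_inj; by rewrite -(he i).2 -(he j).2 eij.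
- move=> x Xx.
  have cX : components X (connected_component X x) by exists x.
  have fl : (f (connected_component X x) < k)%N by have := ffun _ cX.
  exists (Ordinal fl); apply: finj; rewrite ?inE.
  + exact: (he _).1.
  + exact: cX.
  + by rewrite (he _).2.
Qed.

Lemma pick_inj (N r : nat) (S : {set 'I_N}) : (r <= #|S|)%N ->
  exists h : 'I_r -> 'I_N, injective h /\ forall i, h i \in S.
Proof.
move=> H; exists (fun i => enum_val (widen_ord H i)); split.
  by move=> i j /enum_val_inj /(congr1 val) /= e; apply: ord_inj.
by move=> i; apply: enum_valP.
Qed.

Lemma deg0 (X A : set V) nX nA : A `<=` X -> ncomp X nX -> ncomp A nA ->
  hrank_deg_ge X A 0 (nX - nA).
Proof.
move=> AX /ncomp_enum [eX [eXc eXi eXs]] /ncomp_enum [eA [eAc eAi eAs]].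
have hpi : forall i : 'I_nA, exists p : V * 'I_nX,
    [/\ A p.1, eA i = connected_component A p.1 & eX p.2 = connected_component X p.1].
  move=> i; have [a Aa ea] := eAc i; have [j ej] := eXs a (AX a Aa).
  by exists (a, j).
have [fA hfA] := choice hpi.
have hpx : forall j : 'I_nX, exists x, X x /\ eX j = connected_component X x.
  by move=> j; have [x Xx ex] := eXc j; exists x.
have [pX hpX] := choice hpx.
pose B := (fun i => (fA i).2) @: [set: 'I_nA]%SET.
have cardS : (nX - nA <= #|~: B|)%N.
  have := cardsC B; have := leq_imset_card (fun i => (fA i).2) [set: 'I_nA]%SET.
  rewrite cardsT !card_ord -/B; lia.
have [h [hinj hS]] := pick_inj cardS.
exists (fun i => [:: (1, pt (pX (h i)))]); split.
  move=> i p; rewrite inE => /eqP -> /=; apply: pt_adm; exact: (hpX _).1.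
move=> l [w [a [cw ca e]]] j.
set K := eX (h j).
have L1 : Lf (phi0 (gind K)) (lincomb l (fun i => [:: (1, pt (pX (h i)))])) = l j.
  have t1 : forall i, Lf (phi0 (gind K)) [:: (1, pt (pX (h i)))] = if i == j then 1 else 0.
    move=> i; rewrite /Lf big_cons big_nil /= mul1r addr0 /phi0 /pt asboolT; last first.
      exact: vtx_std.
    rewrite /K (hpX (h j)).2 /gind.
    have [->|ne] := eqVneq i j.
      by rewrite asboolT //; apply: connected_component_refl; exact: (hpX _).1.
    rewrite asboolF // => hc; move/eqP: ne; apply; apply: hinj; apply: eXi.
    by rewrite (hpX (h j)).2 (hpX (h i)).2 (same_connected_component hc).
  rewrite Lf_lincomb; under eq_bigr => i _ do rewrite t1.
  rewrite (bigD1 j) //= eqxx mulr1 big1 ?addr0 // => i /negPf ->.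
  by rewrite mulr0.
have L2 : Lf (phi0 (gind K)) (boundary w) = 0.
  rewrite Lf_boundary big1_seq // => p /andP[_ pw].
  rewrite bd_phi0 /phi1 /K (hpX (h j)).2.
  by rewrite (gind_comp _ (adm1_comp (cw p pw))) subrr mulr0.
have L3 : Lf (phi0 (gind K)) a = 0.
  rewrite /Lf big1_seq // => p /andP[_ pa].
  have [_ sA _] := ca p pa.
  have Az : A (p.2 (vtx 0 0)) by apply: sA; exists (vtx 0 0) => //; apply: vtx_std.
  rewrite /phi0 /gind asboolF ?mulr0 // => Kz.
  have [i ei] := eAs _ Az.
  have [Aai eAi' eXi'] := hfA i.
  have cA : connected_component A (fA i).1 (p.2 (vtx 0 0)).
    by rewrite -eAi' ei; apply: connected_component_refl.
  have cX := comp_sub AX Aai cA.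
  move: Kz; rewrite /K (hpX (h j)).2 => Kz.
  have ee : eX (fA i).2 = eX (h j).
    by rewrite eXi' (hpX (h j)).2; apply: comp_same cX Kz.
  have := hS j; rewrite inE -(eXi _ _ ee).
  by rewrite (imset_f (fun i => (fA i).2)) // inE.
by have := Lf_eq (phi0 (gind K)) e; rewrite Lf_cat L1 L2 L3 addr0.
Qed.

Lemma deg1 (m : nat) (P : 'I_m -> set V) (X A : set V) nX nA :
  (forall z, X z <-> exists i, P i z) -> (forall i, closed (P i)) ->
  (forall i u v (a b : R), P i u -> P i v -> 0 <= a -> 0 <= b -> a + b = 1 ->
     P i (a *: u + b *: v)) ->
  A `<=` X -> ncomp X nX -> ncomp A nA -> hrank_deg_ge X A 1 (nA - nX).
Proof.
move=> hX hcl hcv AX /ncomp_enum [eX [eXc eXi eXs]] /ncomp_enum [eA [eAc eAi eAs]].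
have hpi : forall i : 'I_nA, exists p : V * 'I_nX,
    [/\ A p.1, eA i = connected_component A p.1 & eX p.2 = connected_component X p.1].
  move=> i; have [a Aa ea] := eAc i; have [j ej] := eXs a (AX a Aa).
  by exists (a, j).
have [fA hfA] := choice hpi.
pose pi := fun i => (fA i).2.
pose aA := fun i => (fA i).1.
have hA1 : forall i, A (aA i) by move=> i; case: (hfA i).
have hA2 : forall i, eA i = connected_component A (aA i) by move=> i; case: (hfA i).
have hA3 : forall i, eX (pi i) = connected_component X (aA i) by move=> i; case: (hfA i).
pose rep := fun i => odflt i [pick k | pi k == pi i].
have repS : forall i, [pick k | pi k == pi i] = Some (rep i) /\ pi (rep i) = pi i.
  move=> i; rewrite /rep; case: pickP => [k /eqP hk|hh]; first by split.
  by have := hh i; rewrite eqxx.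
have repE : forall i i', pi i = pi i' -> rep i = rep i'.
  move=> i i' ee; have [h1 _] := repS i; have [h2 _] := repS i'.
  by rewrite ee h2 in h1; case: h1.
have reprep : forall i, rep (rep i) = rep i.
  by move=> i; apply: repE; exact: (repS i).2.
pose N := [set i | rep i != i]%SET.
have cardN : (nA - nX <= #|N|)%N.
  have inj : {in ~: N &, injective pi}.
    move=> i i'; rewrite !inE !negbK => /eqP e1 /eqP e2 ee.
    by rewrite -e1 -e2; apply: repE.
  have := card_in_imset inj; have := max_card (pi @: ~: N); have := cardsC N.
  rewrite !card_ord; lia.
have [h [hinj hN]] := pick_inj cardN.
set Q := (fun u v => exists i, P i u /\ P i v).
have hpath : forall i : 'I_nA, exists xs, okp Q (aA (rep i)) xs /\ last (aA (rep i)) xs = aA i.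
  move=> i; apply: (poly_connect hX hcl).
    by apply: AX; exact: hA1 _.
  have : eX (pi (rep i)) = eX (pi i) by rewrite (repS i).2.
  rewrite !hA3 => ->.
  by apply: connected_component_refl; apply: AX.
have [xs hxs] := choice hpath.
exists (fun i => poly (aA (rep (h i))) (xs (h i))); split.
  move=> i; split.
    apply: poly_chain_in (hxs _).1.
    by move=> u v [k [Pu Pv]] a b a0 b0 ab; apply/hX; exists k; exact: hcv.
  exists [:: (1, pt (aA (h i))); (-1, pt (aA (rep (h i))))]; split.
    move=> p; rewrite !inE => /orP[/eqP->|/eqP->]; apply: pt_adm; exact: hA1 _.
  by have := poly_bd (aA (rep (h i))) (xs (h i)); rewrite (hxs _).2.
move=> l [w [a [cw ca e]]] j.
set K := eA (h j).
have gval : forall x, gind K (aA x) = if x == h j then 1 else 0.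
  move=> x; rewrite /K (hA2 (h j)) /gind.
  have [->|ne] := eqVneq x (h j).
    by rewrite asboolT //; apply: connected_component_refl; exact: hA1 _.
  rewrite asboolF // => hc; move/eqP: ne; apply; apply: eAi.
  by rewrite (hA2 x) (hA2 (h j)) (same_connected_component hc).
have L1 : Lf (phi1 (gind K)) (lincomb l (fun i => poly (aA (rep (h i))) (xs (h i)))) = l j.
  rewrite Lf_lincomb.
  under eq_bigr => i _ do rewrite Lf_poly (hxs _).2 !gval (inj_eq hinj).
  have r0 : forall i, (rep (h i) == h j) = false.
    move=> i; apply/negP => /eqP ee; have := hN j; rewrite inE -ee reprep.
    by rewrite eqxx.
  under eq_bigr => i _ do rewrite r0 subr0.
  rewrite (bigD1 j) //= eqxx mulr1 big1 ?addr0 // => i /negPf ->.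
  by rewrite mulr0.
have L2 : Lf (phi1 (gind K)) (boundary w) = 0.
  by rewrite Lf_boundary big1_seq // => p /andP[_ pw]; rewrite bd_phi1 mulr0.
have L3 : Lf (phi1 (gind K)) a = 0.
  rewrite /Lf big1_seq // => p /andP[_ pa].
  rewrite /phi1 /K (hA2 (h j)).
  by rewrite (gind_comp _ (adm1_comp (ca p pa))) subrr mulr0.
by have := Lf_eq (phi1 (gind K)) e; rewrite Lf_cat L1 L2 L3 addr0.
Qed.

Lemma rank_lemma (m : nat) (P : 'I_m -> set V) (X A : set V) nX nA :
  (forall z, X z <-> exists i, P i z) -> (forall i, closed (P i)) ->
  (forall i u v (a b : R), P i u -> P i v -> 0 <= a -> 0 <= b -> a + b = 1 ->
     P i (a *: u + b *: v)) ->
  A `<=` X -> ncomp X nX -> ncomp A nA ->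
  hrank_ge X A (maxn nA nX - minn nA nX).
Proof.
move=> hX hcl hcv AX cX cA; exists [:: (nX - nA)%N; (nA - nX)%N]; split.
  rewrite /=; lia.
move=> k; case: k => [|[|//]] _ /=; first exact: deg0.
exact: deg1 hX hcl hcv AX cX cA.
Qed.

Lemma dotp_cont (a : V) : continuous (dotp a).
Proof.
have H : forall s : seq 'I_n, continuous (fun x : V => \sum_(i <- s) a 0 i * x 0 i).
  elim => [|i s IH].
    have -> : (fun x : V => \sum_(i <- [::]) a 0 i * x 0 i) = fun=> 0.
      by apply/funext => x; rewrite big_nil.
    exact: cst_continuous.
  have -> : (fun x : V => \sum_(j <- i :: s) a 0 j * x 0 j) =
      (fun x : V => a 0 i * x 0 i + \sum_(j <- s) a 0 j * x 0 j).
    by apply/funext => x; rewrite big_cons.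
  move=> x; apply: (@continuousD _ _ _ (fun x : V => a 0 i * x 0 i)
    (fun x : V => \sum_(j <- s) a 0 j * x 0 j)); last exact: IH.
  apply: (@continuousM _ _ (fun=> a 0 i) (fun x : V => x 0 i)).
    exact: cst_continuous.
  exact: coord_continuous.
exact: (H (index_enum _)).
Qed.

Lemma dotp_comb (a u v : V) (al be : R) :
  dotp a (al *: u + be *: v) = al * dotp a u + be * dotp a v.
Proof.
rewrite /dotp !mulr_sumr -big_split; apply: eq_bigr => i _ /=.
rewrite !mxE; ring.
Qed.

Lemma polyhedron_closed (Cs : set V) : polyhedron Cs -> closed Cs.
Proof.
move=> [k [a [b ->]]].
have -> : [set x | forall j : 'I_k, halfspace (a j) (b j) x] =
    \bigcap_(j in [set: 'I_k]) (dotp (a j) @^-1` [set y | y <= b j]).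
  apply/seteqP; split => x /=.
    by move=> h j _; apply: h.
  by move=> h j; apply: h.
apply: closed_bigI => j _; apply: preimage_closed; last exact: closed_le.
by move=> x _; apply: dotp_cont.
Qed.

Lemma polyhedron_convex (Cs : set V) : polyhedron Cs ->
  forall u v (al be : R), Cs u -> Cs v -> 0 <= al -> 0 <= be -> al + be = 1 ->
  Cs (al *: u + be *: v).
Proof.
move=> [k [a [b ->]]] u v al be /= hu hv a0 b0 ab j.
rewrite /halfspace /= dotp_comb.
have := hu j; have := hv j; rewrite /halfspace /= => h1 h2.
have e : b j = al * b j + be * b j by rewrite -mulrDl ab mul1r.
rewrite [leRHS]e; apply: lerD; apply: ler_wpM2l => //.
Qed.

Lemma pieces_ok (m : nat) (F : V -> R) (C : 'I_m -> set V) (S : set R) :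
  finite_PL F C -> closed S ->
  (forall s t (al be : R), S s -> S t -> 0 <= al -> 0 <= be -> al + be = 1 ->
     S (al * s + be * t)) ->
  exists P : 'I_m -> set V,
  [/\ forall z, S (F z) <-> exists i, P i z,
      forall i, closed (P i) &
      forall i u v (al be : R), P i u -> P i v -> 0 <= al -> 0 <= be -> al + be = 1 ->
     P i (al *: u + be *: v)].
Proof.
move=> [Fc [Cp _ _] Ccov Faff] Scl Scv.
exists (fun i => C i `&` [set x | S (F x)]); split.
- move=> z; split.
    move=> Sz; have : (\bigcup_(i in [set: 'I_m]) C i) z by rewrite Ccov.
    by move=> [i _ Ci]; exists i.
  by move=> [i [_ Sz]].
- move=> i; apply: closedI; first exact: polyhedron_closed.
  apply: (@preimage_closed _ _ F S) => //; by move=> x _; apply: Fc.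
- move=> i u v al be [Cu Su] [Cv Sv] a0 b0 ab; split.
    exact: polyhedron_convex.
  have [a [c hF]] := Faff i.
  rewrite /= hF; last exact: polyhedron_convex.
  rewrite dotp_comb.
  have -> : al * dotp a u + be * dotp a v + c =
      al * (dotp a u + c) + be * (dotp a v + c).
    have e : c = al * c + be * c by rewrite -mulrDl ab mul1r.
    by rewrite {1}e; ring.
  by rewrite -!hF //; apply: Scv.
Qed.

End Simplices.

Theorem theorem1p5 (R : realType) (n m : nat) (F : 'rV[R]_n -> R)
    (C : 'I_m -> set 'rV[R]_n) (M : R) :
  finite_PL F C ->
  0 < M ->
  (forall i, flat_cell F (C i) -> F @` C i `<=` `[- M, M]) ->
  (forall nm np : nat,
     ncomp [set x | F x <= - M] nm -> ncomp [set x | F x <= M] np ->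
     hrank_ge [set x | F x <= M] [set x | F x <= - M] (maxn nm np - minn nm np)%N)
  /\
  (forall Np Nm : nat,
     ncomp [set x | M <= F x] Np -> ncomp [set x | - M <= F x] Nm ->
     hrank_ge [set x | - M <= F x] [set x | M <= F x] (maxn Np Nm - minn Np Nm)%N).
Proof.
move=> hPL M0 _; split.
- move=> nm np cA cX.
  have Scv : forall s t (al be : R), s <= M -> t <= M -> 0 <= al -> 0 <= be ->
      al + be = 1 -> al * s + be * t <= M.
    by move=> s t al be hs ht a0 b0 ab; nra.
  have [P [hX hcl hcv]] := @pieces_ok R n m F C [set y | y <= M] hPL ltac:(exact: closed_le) Scv.
  apply: (rank_lemma hX hcl hcv) => //.
  by move=> x /= hx; lra.
- move=> Np Nm cA cX.
  have Scv : forall s t (al be : R), - M <= s -> - M <= t -> 0 <= al -> 0 <= be ->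
      al + be = 1 -> - M <= al * s + be * t.
    by move=> s t al be hs ht a0 b0 ab; nra.
  have [P [hX hcl hcv]] := @pieces_ok R n m F C [set y | - M <= y] hPL ltac:(exact: closed_ge) Scv.
  apply: (rank_lemma hX hcl hcv) => //.
  by move=> x /= hx; lra.
Qed.
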